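(* Let $K=\langle a,b,s\mid sas^{-1}=ab,\ sbs^{-1}=b\rangle$ and $L=\langle c,q\mid c(qcq^{-1})=(qcq^{-1})c\rangle$ (these groups are isomorphic via $a\mapsto cq^{-1}$, $b\mapsto qcq^{-1}c^{-1}$, $s\mapsto c$). For $i\in\mathbb{Z}$ let $c_i=q^icq^{-i}\in L$. Then: (1) $C_L(c_i)=\langle c_{i-1},c_i,c_{i+1}\rangle$ for every $i\in\mathbb{Z}$; (2) $C_K(s)=\langle aba^{-1},b,s\rangle$.
   Context: $C_G(g)$ denotes the centraliser of $g$ in $G$. *)

(* Defs.v *)
From Stdlib Require Import ZArith.
Set Implicit Arguments.

Record Grp := {
  gcar :> Type;
  gmul : gcar -> gcar -> gcar;
  gone : gcar;
  ginv : gcar -> gcar;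
  gmulA : forall x y z, gmul x (gmul y z) = gmul (gmul x y) z;
  gmul1 : forall x, gmul gone x = x;
  gmulV : forall x, gmul (ginv x) x = gone
}.

Arguments gmul {g} _ _.
Arguments gone {g}.
Arguments ginv {g} _.

Definition gconj {G : Grp} (y x : G) : G := gmul (gmul y x) (ginv y).

Fixpoint gpown {G : Grp} (x : G) (n : nat) : G :=
  match n with O => gone | S n => gmul x (gpown x n) end.

Definition gpowz {G : Grp} (x : G) (z : Z) : G :=
  match z with
  | Z0 => gone
  | Zpos p => gpown x (Pos.to_nat p)
  | Zneg p => ginv (gpown x (Pos.to_nat p))
  end.

Definition is_hom {G H : Grp} (f : G -> H) : Prop :=
  forall x y, f (gmul x y) = gmul (f x) (f y).

Definition centraliser {G : Grp} (g : G) : G -> Prop :=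
  fun x => gmul x g = gmul g x.

Inductive gen {G : Grp} (S : G -> Prop) : G -> Prop :=
  | gen_in : forall x, S x -> gen S x
  | gen_one : gen S gone
  | gen_mul : forall x y, gen S x -> gen S y -> gen S (gmul x y)
  | gen_inv : forall x, gen S x -> gen S (ginv x).

Definition rel_L {G : Grp} (c q : G) : Prop :=
  gmul c (gconj q c) = gmul (gconj q c) c.

(* (G, c, q) is the group presented by <c, q | rel_L>: the relations hold
   and it has the universal property of the presentation. *)
Definition is_pres_L (G : Grp) (c q : G) : Prop :=
  rel_L c q /\
  forall (H : Grp) (c' q' : H), rel_L c' q' ->
    exists f : G -> H, (is_hom f /\ f c = c' /\ f q = q') /\
      forall g : G -> H, is_hom g -> g c = c' -> g q = q' ->
        forall x, g x = f x.

Definition rel_K {G : Grp} (a b s : G) : Prop :=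
  gconj s a = gmul a b /\ gconj s b = b.

Definition is_pres_K (G : Grp) (a b s : G) : Prop :=
  rel_K a b s /\
  forall (H : Grp) (a' b' s' : H), rel_K a' b' s' ->
    exists f : G -> H, (is_hom f /\ f a = a' /\ f b = b' /\ f s = s') /\
      forall g : G -> H, is_hom g -> g a = a' -> g b = b' -> g s = s' ->
        forall x, g x = f x.

Definition cL {G : Grp} (c q : G) (i : Z) : G := gconj (gpowz q i) c.

(* Main.v *)
Require Import Defs.
From Stdlib Require Import ZArith List Lia ProofIrrelevance FunctionalExtensionality.
Import ListNotations.

Arguments gmulA {g} _ _ _.
Arguments gmul1 {g} _.
Arguments gmulV {g} _.
Section GL.
Context {G : Grp}.
Implicit Types x y z : G.

Lemma gmulrV x : gmul x (ginv x) = gone.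
Proof.
  rewrite <- (gmul1 (gmul x (ginv x))).
  rewrite <- (gmulV (ginv x)) at 1.
  rewrite <- gmulA, (gmulA (ginv x) x), gmulV, gmul1. apply gmulV.
Qed.

Lemma gmulr1 x : gmul x gone = x.
Proof. rewrite <- (gmulV x), gmulA, gmulrV, gmul1. reflexivity. Qed.

Lemma ginv_uniq x y : gmul x y = gone -> x = ginv y.
Proof. intro H. rewrite <- (gmulr1 x), <- (gmulrV y), gmulA, H, gmul1. reflexivity. Qed.

Lemma ginv_inv x : ginv (ginv x) = x.
Proof. symmetry. apply ginv_uniq. apply gmulrV. Qed.

Lemma ginv_mul x y : ginv (gmul x y) = gmul (ginv y) (ginv x).
Proof. symmetry. apply ginv_uniq. rewrite <- gmulA, (gmulA (ginv x)), gmulV, gmul1, gmulV. reflexivity. Qed.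

Lemma ginv_one : ginv (@gone G) = gone.
Proof. symmetry. apply ginv_uniq. apply gmul1. Qed.

Lemma gmulKV x y : gmul (gmul x y) (ginv y) = x.
Proof. rewrite <- gmulA, gmulrV, gmulr1. reflexivity. Qed.
Lemma gmulVK x y : gmul (gmul x (ginv y)) y = x.
Proof. rewrite <- gmulA, gmulV, gmulr1. reflexivity. Qed.

Lemma gcancel_l x y z : gmul z x = gmul z y -> x = y.
Proof. intro H. rewrite <- (gmul1 x), <- (gmulV z), <- gmulA, H, gmulA, gmulV, gmul1. reflexivity. Qed.
End GL.

Ltac gsimpl := unfold gconj; repeat progress (rewrite ?ginv_mul, ?ginv_inv, ?ginv_one, ?gmulA, ?gmul1, ?gmulr1, ?gmulKV, ?gmulVK, ?gmulV, ?gmulrV).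


Inductive ltr := A | Ai | B | Bi.
Definition linv x := match x with A => Ai | Ai => A | B => Bi | Bi => B end.
Definition leqb (x y : ltr) : bool :=
  match x, y with A,A | Ai,Ai | B,B | Bi,Bi => true | _,_ => false end.
Definition rc (x : ltr) (w : list ltr) : list ltr :=
  match w with y :: w' => if leqb (linv x) y then w' else x :: w | [] => [x] end.
Fixpoint reduced (w : list ltr) : bool :=
  match w with
  | x :: ((y :: _) as w') => negb (leqb (linv x) y) && reduced w'
  | _ => true end.

Lemma linvK x : linv (linv x) = x. Proof. destruct x; reflexivity. Qed.

Lemma reduced_tail x w : reduced (x :: w) = true -> reduced w = true.
Proof. destruct w; simpl; auto. intro H. apply andb_prop in H. tauto. Qed.

Lemma rc_reduced x w : reduced w = true -> reduced (rc x w) = true.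
Proof.
  destruct w as [|y w]; simpl; auto. intro H.
  destruct (leqb (linv x) y) eqn:E. apply (reduced_tail y w H).
  simpl. rewrite E. simpl. exact H.
Qed.

Lemma rc_cons x w : reduced (x :: w) = true -> rc x w = x :: w.
Proof.
  destruct w as [|y w]; simpl; auto. intro H. apply andb_prop in H. destruct H as [H _].
  destruct (leqb (linv x) y); simpl in *; congruence.
Qed.

Lemma rc_cancel x v : reduced v = true -> rc x (rc (linv x) v) = v.
Proof.
  destruct v as [|y v].
  - destruct x; reflexivity.
  - intro H. simpl. rewrite linvK.
    destruct (leqb x y) eqn:E.
    + assert (x = y) by (destruct x, y; simpl in *; congruence). subst y.
      apply rc_cons. exact H.
    + simpl. destruct x; reflexivity.
Qed.

Definition mult (u v : list ltr) : list ltr := fold_right rc v u.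

Lemma mult_reduced u v : reduced v = true -> reduced (mult u v) = true.
Proof. induction u; simpl; auto. intro H. apply rc_reduced; auto. Qed.

Lemma mult_rc x q r : reduced r = true -> mult (rc x q) r = rc x (mult q r).
Proof.
  intro Hr. destruct q as [|y q]; simpl; auto.
  destruct (leqb (linv x) y) eqn:E; simpl; auto.
  assert (y = linv x) by (destruct x, y; simpl in *; congruence). subst y.
  rewrite rc_cancel; auto. apply mult_reduced; auto.
Qed.

Lemma mult_assoc p q r : reduced r = true -> mult (mult p q) r = mult p (mult q r).
Proof.
  intro Hr. induction p; simpl; auto. rewrite mult_rc; auto. rewrite IHp; auto.
Qed.

Lemma mult_nil w : reduced w = true -> mult w [] = w.
Proof.
  induction w; simpl; auto. intro H. rewrite IHw. apply rc_cons; auto.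
  apply (reduced_tail _ _ H).
Qed.

Section Phi.
Variable img : ltr -> list ltr.
Fixpoint Phi (w : list ltr) : list ltr :=
  match w with [] => [] | x :: w' => mult (img x) (Phi w') end.
Hypothesis img_inv : forall x, mult (img x) (img (linv x)) = [].

Lemma Phi_reduced w : reduced (Phi w) = true.
Proof. induction w; simpl; auto. apply mult_reduced; auto. Qed.

Lemma Phi_rc y v : Phi (rc y v) = mult (img y) (Phi v).
Proof.
  destruct v as [|z v]; simpl; auto.
  destruct (leqb (linv y) z) eqn:E; simpl; auto.
  assert (z = linv y) by (destruct y, z; simpl in *; congruence). subst z.
  rewrite <- mult_assoc by apply Phi_reduced. rewrite img_inv. reflexivity.
Qed.

Lemma Phi_mult p v : Phi (mult p v) = mult (Phi p) (Phi v).
Proof.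
  induction p; simpl; auto. rewrite Phi_rc, IHp, mult_assoc; auto. apply Phi_reduced.
Qed.
End Phi.

Definition img1 x := match x with A => [A;B] | Ai => [Bi;Ai] | B => [B] | Bi => [Bi] end.
Definition img2 x := match x with A => [A;Bi] | Ai => [B;Ai] | B => [B] | Bi => [Bi] end.
Definition Phi1 := Phi img1.
Definition Phi2 := Phi img2.
Lemma img1_inv x : mult (img1 x) (img1 (linv x)) = []. Proof. destruct x; reflexivity. Qed.
Lemma img2_inv x : mult (img2 x) (img2 (linv x)) = []. Proof. destruct x; reflexivity. Qed.

Lemma Phi12 w : reduced w = true -> Phi1 (Phi2 w) = w.
Proof.
  induction w as [|x w IH]; simpl; auto. intro H. unfold Phi1, Phi2 in *.
  rewrite Phi_mult by apply img1_inv. rewrite IH by (apply (reduced_tail _ _ H)).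
  replace (Phi img1 (img2 x)) with [x] by (destruct x; reflexivity).
  simpl. apply rc_cons; auto.
Qed.

Lemma Phi21 w : reduced w = true -> Phi2 (Phi1 w) = w.
Proof.
  induction w as [|x w IH]; simpl; auto. intro H. unfold Phi1, Phi2 in *.
  rewrite Phi_mult by apply img2_inv. rewrite IH by (apply (reduced_tail _ _ H)).
  replace (Phi img2 (img1 x)) with [x] by (destruct x; reflexivity).
  simpl. apply rc_cons; auto.
Qed.

Fixpoint bpre (w : list ltr) : Z :=
  match w with B :: w' => 1 + bpre w' | Bi :: w' => -1 + bpre w' | _ => 0 end%Z.
Fixpoint firsta (w : list ltr) : option bool :=
  match w with A :: _ => Some true | Ai :: _ => Some false | _ :: w' => firsta w' | [] => None end.
Definition dz w : Z := match firsta w with Some false => 1 | _ => 0 end%Z.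

Ltac csimpl := cbn [rc leqb linv bpre firsta reduced negb andb mult fold_right Phi1 Phi img1].
Tactic Notation "csimpl" "in" hyp(h) := cbn [rc leqb linv bpre firsta reduced negb andb mult fold_right Phi1 Phi img1] in h.

Lemma bpre_rcB v : bpre (rc B v) = (bpre v + 1)%Z.
Proof. destruct v as [|[] v]; csimpl; lia. Qed.
Lemma bpre_rcBi v : bpre (rc Bi v) = (bpre v - 1)%Z.
Proof. destruct v as [|[] v]; csimpl; lia. Qed.
Lemma firsta_rcB v : firsta (rc B v) = firsta v.
Proof. destruct v as [|[] v]; csimpl; auto. Qed.
Lemma firsta_rcBi v : firsta (rc Bi v) = firsta v.
Proof. destruct v as [|[] v]; csimpl; auto. Qed.

Lemma bpre_pos w : reduced (B :: w) = true -> (bpre (B :: w) > 0)%Z.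
Proof.
  induction w as [|x w IH]; intro H; [csimpl; lia|].
  destruct x.
  - csimpl; lia.
  - csimpl; lia.
  - change (bpre (B :: B :: w)) with (1 + bpre (B :: w))%Z.
    specialize (IH (reduced_tail _ _ H)). lia.
  - simpl in H. discriminate.
Qed.
Lemma bpre_neg w : reduced (Bi :: w) = true -> (bpre (Bi :: w) < 0)%Z.
Proof.
  induction w as [|x w IH]; intro H; [csimpl; lia|].
  destruct x.
  - csimpl; lia.
  - csimpl; lia.
  - simpl in H. discriminate.
  - change (bpre (Bi :: Bi :: w)) with (-1 + bpre (Bi :: w))%Z.
    specialize (IH (reduced_tail _ _ H)). lia.
Qed.

Lemma start_a w b : reduced w = true -> bpre w = 0%Z -> firsta w = Some b ->
  exists w', w = (if b then A else Ai) :: w'.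
Proof.
  intros H H0 H1. destruct w as [|[] w]; csimpl in H1; try discriminate.
  - inversion H1; subst. eauto.
  - inversion H1; subst. eauto.
  - pose proof (bpre_pos w H). lia.
  - pose proof (bpre_neg w H). lia.
Qed.

Lemma INV w : reduced w = true ->
  firsta (Phi1 w) = firsta w /\ bpre (Phi1 w) = (bpre w - dz w)%Z.
Proof.
  induction w as [|x w IH]; intro H; csimpl; auto.
  pose proof (reduced_tail _ _ H) as Hw. specialize (IH Hw).
  unfold Phi1 in *. csimpl. destruct IH as [IH1 IH2]. unfold dz in *.
  destruct x; csimpl.
  - set (u := rc B (Phi img1 w)).
    assert (Hu : rc A u = A :: u).
    { destruct u as [|[] u'] eqn:Eu; csimpl; auto. exfalso.
      assert (F1 : firsta (rc B (Phi img1 w)) = Some false) by (fold u; rewrite Eu; reflexivity).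
      assert (F2 : bpre (rc B (Phi img1 w)) = 0%Z) by (fold u; rewrite Eu; reflexivity).
      rewrite firsta_rcB, IH1 in F1. rewrite bpre_rcB, IH2, F1 in F2.
      destruct (start_a w false Hw ltac:(lia) F1) as [w' ->].
      csimpl in H. discriminate. }
    rewrite Hu. csimpl. split; auto.
  - set (v := Phi img1 w).
    assert (Hv : rc Ai v = Ai :: v).
    { destruct v as [|[] v'] eqn:Ev; csimpl; auto. exfalso.
      assert (F1 : firsta (Phi img1 w) = Some true) by (fold v; rewrite Ev; reflexivity).
      assert (F2 : bpre (Phi img1 w) = 0%Z) by (fold v; rewrite Ev; reflexivity).
      rewrite IH1 in F1. rewrite IH2, F1 in F2.
      destruct (start_a w true Hw ltac:(lia) F1) as [w' ->].
      csimpl in H. discriminate. }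
    rewrite Hv. csimpl. split; auto.
  - rewrite firsta_rcB, bpre_rcB, IH1, IH2. split; auto. destruct (firsta w) as [[]|]; lia.
  - rewrite firsta_rcBi, bpre_rcBi, IH1, IH2. split; auto. destruct (firsta w) as [[]|]; lia.
Qed.

Lemma NC_A w : reduced (A :: w) = true -> Phi1 (A :: w) = A :: rc B (Phi1 w).
Proof.
  intro H. pose proof (reduced_tail _ _ H) as Hw. destruct (INV w Hw) as [IH1 IH2].
  unfold Phi1 in *. unfold dz in *. simpl.
  set (u := rc B (Phi img1 w)).
  destruct u as [|[] u'] eqn:Eu; simpl; auto. exfalso.
  assert (F1 : firsta (rc B (Phi img1 w)) = Some false) by (fold u; rewrite Eu; reflexivity).
  assert (F2 : bpre (rc B (Phi img1 w)) = 0%Z) by (fold u; rewrite Eu; reflexivity).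
  rewrite firsta_rcB, IH1 in F1. rewrite bpre_rcB, IH2, F1 in F2.
  destruct (start_a w false Hw ltac:(lia) F1) as [w' ->].
  simpl in H. discriminate.
Qed.

Lemma NC_Ai w : reduced (Ai :: w) = true -> Phi1 (Ai :: w) = Bi :: Ai :: Phi1 w.
Proof.
  intro H. pose proof (reduced_tail _ _ H) as Hw. destruct (INV w Hw) as [IH1 IH2].
  unfold Phi1 in *. unfold dz in *. simpl.
  set (v := Phi img1 w).
  destruct v as [|[] v'] eqn:Ev; simpl; auto. exfalso.
  assert (F1 : firsta (Phi img1 w) = Some true) by (fold v; rewrite Ev; reflexivity).
  assert (F2 : bpre (Phi img1 w) = 0%Z) by (fold v; rewrite Ev; reflexivity).
  rewrite IH1 in F1. rewrite IH2, F1 in F2.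
  destruct (start_a w true Hw ltac:(lia) F1) as [w' ->].
  simpl in H. discriminate.
Qed.

Lemma Phi1_cons x w : Phi1 (x :: w) = mult (img1 x) (Phi1 w).
Proof. reflexivity. Qed.

Section Gen.
Context {G : Grp}.
Variables al be si : G.

Definition evl x : G := match x with A => al | Ai => ginv al | B => be | Bi => ginv be end.
Fixpoint eval (w : list ltr) : G := match w with [] => gone | x :: w' => gmul (evl x) (eval w') end.

Definition TT : G -> Prop := fun y => y = gconj al be \/ y = be \/ y = si.

Lemma fix_gen w : reduced w = true ->
  (Phi1 w = w -> gen TT (eval w)) /\ (Phi1 w = rc Bi w -> gen TT (gmul al (eval w))).
Proof.
  induction w as [|x w IH]; intro H.
  - split; intro E. apply gen_one. discriminate.
  - pose proof (reduced_tail _ _ H) as Hw. specialize (IH Hw). destruct IH as [IH1 IH2].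
    assert (HP : reduced (Phi1 w) = true) by apply Phi_reduced.
    destruct x.
    + rewrite NC_A by exact H. split; intro E.
      * injection E as E. apply IH2.
        transitivity (rc Bi (rc B (Phi1 w))). symmetry; exact (rc_cancel Bi _ HP).
        rewrite E; reflexivity.
      * simpl in E. discriminate.
    + rewrite NC_Ai by exact H. split; intro E.
      * discriminate.
      * simpl in E. injection E as E. simpl. rewrite gmulA, gmulrV, gmul1. apply IH1; auto.
    + rewrite Phi1_cons. change (mult (img1 B) (Phi1 w)) with (rc B (Phi1 w)). split; intro E.
      * assert (E' : Phi1 w = w).
        { transitivity (rc Bi (rc B (Phi1 w))). symmetry; exact (rc_cancel Bi _ HP).
          rewrite E. simpl. reflexivity. }
        simpl. apply gen_mul. apply gen_in. unfold TT; auto. auto.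
      * assert (E' : Phi1 w = rc Bi w).
        { transitivity (rc Bi (rc B (Phi1 w))). symmetry; exact (rc_cancel Bi _ HP).
          rewrite E. simpl. reflexivity. }
        simpl. specialize (IH2 E').
        replace (gmul al (gmul be (eval w))) with (gmul (gconj al be) (gmul al (eval w))) by (gsimpl; reflexivity).
        apply gen_mul; auto. apply gen_in. unfold TT; auto.
    + rewrite Phi1_cons. change (mult (img1 Bi) (Phi1 w)) with (rc Bi (Phi1 w)). split; intro E.
      * assert (E' : Phi1 w = w).
        { transitivity (rc B (rc Bi (Phi1 w))). symmetry; exact (rc_cancel B _ HP).
          rewrite E. simpl. reflexivity. }
        simpl. apply gen_mul. apply gen_inv. apply gen_in. unfold TT; auto. auto.
      * assert (E' : Phi1 w = rc Bi w).
        { transitivity (rc B (rc Bi (Phi1 w))). symmetry; exact (rc_cancel B _ HP).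
          rewrite E. simpl.
          symmetry. apply rc_cons. exact H. }
        simpl. specialize (IH2 E').
        replace (gmul al (gmul (ginv be) (eval w))) with (gmul (ginv (gconj al be)) (gmul al (eval w))) by (gsimpl; reflexivity).
        apply gen_mul; auto. apply gen_inv. apply gen_in. unfold TT; auto.
Qed.
End Gen.

Section GL2.
Context {G : Grp}.
Implicit Types x y z g : G.

Lemma gconj_mul g x y : gconj g (gmul x y) = gmul (gconj g x) (gconj g y).
Proof. gsimpl. reflexivity. Qed.
Lemma gconj_inv g x : gconj g (ginv x) = ginv (gconj g x).
Proof. gsimpl. reflexivity. Qed.
Lemma gconj_one g : gconj g gone = gone.
Proof. gsimpl. reflexivity. Qed.
Lemma conj_conj g x y : gconj g (gconj x y) = gconj (gconj g x) (gconj g y).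
Proof. gsimpl. reflexivity. Qed.
Lemma conj_fix g y : gconj g y = y -> gmul y g = gmul g y.
Proof. intro H. rewrite <- H at 1. gsimpl. reflexivity. Qed.
Lemma comm_conj g y : gmul g y = gmul y g -> gconj g y = y.
Proof. intro H. unfold gconj. rewrite H. gsimpl. reflexivity. Qed.
Lemma comm_conj_pres g u v : gmul u v = gmul v u ->
  gmul (gconj g u) (gconj g v) = gmul (gconj g v) (gconj g u).
Proof. intro H. rewrite <- !gconj_mul, H. reflexivity. Qed.

Lemma gpown_r x k : gpown x (S k) = gmul (gpown x k) x.
Proof.
  induction k; simpl. rewrite gmulr1, gmul1. reflexivity.
  simpl in IHk. rewrite IHk, gmulA, IHk. reflexivity.
Qed.

Lemma gpowz_nat x k : gpowz x (Z.of_nat k) = gpown x k.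
Proof. destruct k; simpl; auto. rewrite SuccNat2Pos.id_succ. reflexivity. Qed.
Lemma gpowz_negnat x k : gpowz x (- Z.of_nat k) = ginv (gpown x k).
Proof. destruct k; simpl. rewrite ginv_one; auto. rewrite SuccNat2Pos.id_succ. reflexivity. Qed.

Lemma gpowz_succ x n : gpowz x (n + 1) = gmul x (gpowz x n).
Proof.
  assert (exists k, n = Z.of_nat k \/ n = (- Z.of_nat (S k))%Z) as [k [-> | ->]].
  { destruct (Z_le_gt_dec 0 n).
    - exists (Z.to_nat n). left. lia.
    - exists (Z.to_nat (- n - 1)). right. lia. }
  - replace (Z.of_nat k + 1)%Z with (Z.of_nat (S k)) by lia.
    rewrite !gpowz_nat. reflexivity.
  - replace (- Z.of_nat (S k) + 1)%Z with (- Z.of_nat k)%Z by lia.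
    rewrite !gpowz_negnat, gpown_r. gsimpl. reflexivity.
Qed.

Lemma gpowz_pred x n : gpowz x (n - 1) = gmul (ginv x) (gpowz x n).
Proof. rewrite <- (Z.sub_add 1 n) at 2. rewrite gpowz_succ. gsimpl. reflexivity. Qed.

Lemma gpowz_add x m n : gpowz x (m + n) = gmul (gpowz x m) (gpowz x n).
Proof.
  induction m using Z.peano_ind.
  - simpl. rewrite gmul1. reflexivity.
  - replace (Z.succ m + n)%Z with (m + n + 1)%Z by lia. unfold Z.succ.
    rewrite !gpowz_succ, IHm, gmulA. reflexivity.
  - replace (Z.pred m + n)%Z with (m + n - 1)%Z by lia.
    rewrite <- Z.sub_1_r, !gpowz_pred, IHm, gmulA. reflexivity.
Qed.

Lemma gen_pow (S : G -> Prop) x n : gen S x -> gen S (gpowz x n).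
Proof.
  intro H. assert (forall k, gen S (gpown x k)).
  { induction k; simpl. apply gen_one. apply gen_mul; auto. }
  destruct n; simpl; auto. apply gen_one. apply gen_inv; auto.
Qed.

Lemma gen_sub (S T : G -> Prop) x : (forall y, S y -> gen T y) -> gen S x -> gen T x.
Proof. intros H Hx. induction Hx. auto. apply gen_one. apply gen_mul; auto. apply gen_inv; auto. Qed.

Lemma gen_cent (S : G -> Prop) g x : (forall y, S y -> gmul y g = gmul g y) -> gen S x -> gmul x g = gmul g x.
Proof.
  intros H Hx. induction Hx.
  - auto.
  - rewrite gmul1, gmulr1. reflexivity.
  - rewrite <- gmulA, IHHx2, gmulA, IHHx1, <- gmulA. reflexivity.
  - transitivity (gmul (ginv x) (gmul (gmul g x) (ginv x))). { gsimpl; reflexivity. }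
    rewrite <- IHHx. gsimpl. reflexivity.
Qed.

Lemma gen_conj (S : G -> Prop) g y : gen S y -> gen (fun z => exists u, S u /\ z = gconj g u) (gconj g y).
Proof.
  intro H. induction H.
  - apply gen_in. eauto.
  - rewrite gconj_one. apply gen_one.
  - rewrite gconj_mul. apply gen_mul; auto.
  - rewrite gconj_inv. apply gen_inv; auto.
Qed.
End GL2.

Section Hom.
Context {G H : Grp} (f : G -> H) (Hf : is_hom f).
Lemma hom_one : f gone = gone.
Proof. apply (gcancel_l _ _ (f gone)). rewrite <- Hf, gmul1, gmulr1. reflexivity. Qed.
Lemma hom_inv x : f (ginv x) = ginv (f x).
Proof. apply ginv_uniq. rewrite <- Hf, gmulV. apply hom_one. Qed.
Lemma hom_gpowz x n : f (gpowz x n) = gpowz (f x) n.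
Proof.
  assert (forall k, f (gpown x k) = gpown (f x) k).
  { induction k; simpl. apply hom_one. rewrite Hf, IHk. reflexivity. }
  destruct n; simpl; auto. apply hom_one. rewrite hom_inv, H0. reflexivity.
Qed.
Lemma hom_conj g x : f (gconj g x) = gconj (f g) (f x).
Proof. unfold gconj. rewrite !Hf, hom_inv. reflexivity. Qed.
End Hom.

Definition W := { w : list ltr | reduced w = true }.
Lemma W_eq (v1 v2 : W) : proj1_sig v1 = proj1_sig v2 -> v1 = v2.
Proof. destruct v1, v2; simpl; intro; subst; f_equal; apply proof_irrelevance. Qed.

Record Bij := mkBij { fw : W -> W; bw : W -> W;
  fwbw : forall v, fw (bw v) = v; bwfw : forall v, bw (fw v) = v }.

Lemma bij_eq (x y : Bij) : (forall v, fw x v = fw y v) -> x = y.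
Proof.
  intro H. assert (Hf : fw x = fw y) by (apply functional_extensionality; exact H).
  assert (Hb : bw x = bw y).
  { apply functional_extensionality; intro v. rewrite <- (fwbw y v) at 1.
    rewrite <- Hf, bwfw. reflexivity. }
  destruct x, y; simpl in *; subst; f_equal; apply proof_irrelevance.
Qed.

Definition bmul (x y : Bij) : Bij.
Proof.
  refine (mkBij (fun v => fw x (fw y v)) (fun v => bw y (bw x v)) _ _); intro v;
  rewrite ?fwbw, ?bwfw; reflexivity.
Defined.
Definition bone : Bij := mkBij (fun v => v) (fun v => v) (fun _ => eq_refl) (fun _ => eq_refl).
Definition binv (x : Bij) : Bij := mkBij (bw x) (fw x) (bwfw x) (fwbw x).

Definition HG : Grp.
Proof.
  refine {| gcar := Bij; gmul := bmul; gone := bone; ginv := binv |}.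
  - intros; apply bij_eq; reflexivity.
  - intros; apply bij_eq; reflexivity.
  - intros; apply bij_eq; intro v; simpl. apply bwfw.
Defined.

Definition mapW (f : list ltr -> list ltr) (Hf : forall w, reduced w = true -> reduced (f w) = true) : W -> W :=
  fun v => exist _ (f (proj1_sig v)) (Hf _ (proj2_sig v)).

Lemma rc_cancel' x v : reduced v = true -> rc (linv x) (rc x v) = v.
Proof. intro H. pose proof (rc_cancel (linv x) v H). rewrite linvK in H0. exact H0. Qed.

Definition lamB (x : ltr) : HG.
Proof.
  refine (mkBij (mapW (rc x) (rc_reduced x)) (mapW (rc (linv x)) (rc_reduced (linv x))) _ _);
  intro v; apply W_eq; simpl. apply rc_cancel, proj2_sig. apply rc_cancel', proj2_sig.
Defined.

Definition sigH : HG.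
Proof.
  refine (mkBij (mapW Phi1 (fun w _ => Phi_reduced img1 w)) (mapW Phi2 (fun w _ => Phi_reduced img2 w)) _ _);
  intro v; apply W_eq; simpl. apply Phi12, proj2_sig. apply Phi21, proj2_sig.
Defined.

Definition alH := lamB A.
Definition beH := lamB B.

Lemma relK_H : rel_K alH beH sigH.
Proof.
  split; apply bij_eq; intro v; apply W_eq; simpl; unfold Phi1;
  rewrite Phi_rc by apply img1_inv; fold Phi1; rewrite Phi12 by apply proj2_sig; reflexivity.
Qed.

Section Main.
Context {G : Grp}.
Variables al be si : G.
Hypothesis Hrel : rel_K al be si.

Lemma evl_inv x : gmul (evl al be x) (evl al be (linv x)) = gone.
Proof. destruct x; simpl; rewrite ?ginv_inv; (apply gmulrV || apply gmulV). Qed.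

Lemma eval_rc x w : eval al be (rc x w) = gmul (evl al be x) (eval al be w).
Proof.
  destruct w as [|y w]; simpl; auto.
  destruct (leqb (linv x) y) eqn:E; simpl; auto.
  assert (y = linv x) by (destruct x, y; simpl in *; congruence). subst y.
  rewrite gmulA, evl_inv, gmul1. reflexivity.
Qed.

Lemma eval_mult u v : eval al be (mult u v) = gmul (eval al be u) (eval al be v).
Proof. induction u; simpl. rewrite gmul1; auto. rewrite eval_rc, IHu, gmulA. reflexivity. Qed.

Lemma eval_img1 x : eval al be (img1 x) = gconj si (evl al be x).
Proof.
  destruct Hrel as [H1 H2].
  destruct x; simpl; rewrite ?gconj_inv, ?H1, ?H2; gsimpl; reflexivity.
Qed.

Lemma eval_Phi1 w : eval al be (Phi1 w) = gconj si (eval al be w).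
Proof.
  induction w; simpl. rewrite gconj_one; auto.
  unfold Phi1 in *. simpl. rewrite eval_mult, eval_img1, IHw, gconj_mul. reflexivity.
Qed.

Lemma eval_Phi2 w : reduced w = true -> eval al be (Phi2 w) = gconj (ginv si) (eval al be w).
Proof.
  intro H. rewrite <- (Phi12 w H) at 2. rewrite eval_Phi1. gsimpl. reflexivity.
Qed.

Definition NF (x : G) := exists w n, reduced w = true /\ x = gmul (eval al be w) (gpowz si n).

Lemma NF_letter x y : NF y -> NF (gmul (evl al be x) y).
Proof.
  intros (w & n & Hw & ->). exists (rc x w), n. split. apply rc_reduced; auto.
  rewrite eval_rc, gmulA. reflexivity.
Qed.

Lemma NF_si y : NF y -> NF (gmul si y).
Proof.
  intros (w & n & Hw & ->). exists (Phi1 w), (n + 1)%Z. split. apply Phi_reduced.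
  rewrite eval_Phi1, gpowz_succ. gsimpl. reflexivity.
Qed.

Lemma NF_siV y : NF y -> NF (gmul (ginv si) y).
Proof.
  intros (w & n & Hw & ->). exists (Phi2 w), (n - 1)%Z. split. apply Phi_reduced.
  rewrite eval_Phi2 by auto. rewrite gpowz_pred. gsimpl. reflexivity.
Qed.

Definition S0 : G -> Prop := fun y => y = al \/ y = be \/ y = si.

Lemma gen_NF x : gen S0 x -> NF x.
Proof.
  intro Hx.
  assert (Q : forall y, NF y -> NF (gmul x y) /\ NF (gmul (ginv x) y)).
  { induction Hx; intros z Hz.
    - destruct H as [-> | [-> | ->]]; split.
      + apply (NF_letter A); auto.
      + apply (NF_letter Ai); auto.
      + apply (NF_letter B); auto.
      + apply (NF_letter Bi); auto.
      + apply NF_si; auto.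
      + apply NF_siV; auto.
    - rewrite ginv_one, gmul1. auto.
    - rewrite ginv_mul, <- !gmulA. split.
      + apply IHHx1, IHHx2, Hz.
      + apply IHHx2, IHHx1, Hz.
    - rewrite ginv_inv. split; apply IHHx; auto. }
  rewrite <- (gmulr1 x). apply Q. exists [], 0%Z. split; auto. simpl. rewrite gmul1. reflexivity.
Qed.

Lemma TT_comm y : TT al be si y -> gmul y si = gmul si y.
Proof.
  destruct Hrel as [H1 H2].
  intros [-> | [-> | ->]].
  - apply conj_fix. rewrite conj_conj, H1, H2. gsimpl. reflexivity.
  - apply conj_fix. exact H2.
  - reflexivity.
Qed.

Lemma rel_X : gconj (gmul (ginv al) si) si = gmul be si.
Proof.
  destruct Hrel as [H1 H2].
  assert (E : gmul si al = gmul (gmul al be) si).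
  { rewrite <- H1. gsimpl. reflexivity. }
  transitivity (gmul (ginv al) (gmul si al)). { gsimpl. reflexivity. }
  rewrite E. gsimpl. reflexivity.
Qed.

Lemma relK_relL : rel_L si (gmul (ginv al) si).
Proof.
  unfold rel_L. rewrite rel_X. destruct Hrel as [H1 H2].
  pose proof (conj_fix _ _ H2) as E. rewrite gmulA, <- E. reflexivity.
Qed.

Variables (f : G -> HG) (Hf : is_hom f) (fa : f al = alH) (fb : f be = beH) (fs : f si = sigH).

Lemma f_eval w v : proj1_sig (fw (f (eval al be w)) v) = mult w (proj1_sig v).
Proof.
  induction w as [|x w IH]; simpl.
  - rewrite (hom_one f Hf). reflexivity.
  - rewrite Hf. simpl. destruct x; simpl;
    rewrite ?(hom_inv f Hf), ?fa, ?fb; simpl; rewrite IH; reflexivity.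
Qed.

Lemma f_pow n v : proj1_sig v = [] -> proj1_sig (fw (gpowz sigH n) v) = [].
Proof.
  assert (forall k v, proj1_sig v = [] -> proj1_sig (fw (gpown sigH k) v) = [] /\
                                            proj1_sig (bw (gpown sigH k) v) = []).
  { induction k; intros u Hu; simpl; auto.
    destruct (IHk u Hu) as [E1 E2]. split.
    - simpl. rewrite E1. reflexivity.
    - apply IHk. simpl. rewrite Hu. reflexivity. }
  intro Hv. destruct n; simpl; auto. apply H; auto. apply H; auto.
Qed.

Theorem cent_gen x : gen S0 x -> gmul x si = gmul si x -> gen (TT al be si) x.
Proof.
  intros Hx Hc. destruct (gen_NF x Hx) as (w & n & Hw & Ex).
  assert (Hv : forall v, proj1_sig v = [] -> proj1_sig (fw (f x) v) = w).
  { intros v Hv. rewrite Ex, Hf. simpl. rewrite f_eval, (hom_gpowz f Hf), fs, f_pow; auto.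
    apply mult_nil; auto. }
  pose (e0 := exist (fun w => reduced w = true) [] eq_refl : W).
  assert (E := f_equal (fun g => proj1_sig (fw (f g) e0)) Hc). simpl in E.
  rewrite !Hf in E. simpl in E. rewrite fs in E. simpl in E.
  rewrite Hv in E by reflexivity. rewrite Hv in E by reflexivity.
  rewrite Ex. apply gen_mul.
  - apply fix_gen; auto.
  - apply gen_pow. apply gen_in. unfold TT; auto.
Qed.
End Main.

Section Sub.
Context {G : Grp} (S : G -> Prop).
Definition sub_car := {x : G | gen S x}.
Lemma sub_eq (x y : sub_car) : proj1_sig x = proj1_sig y -> x = y.
Proof. destruct x, y; simpl; intro; subst; f_equal; apply proof_irrelevance. Qed.
Definition SubG : Grp.
Proof.
  refine {| gcar := sub_car;
            gmul := fun x y => exist _ (gmul (proj1_sig x) (proj1_sig y)) (gen_mul (proj2_sig x) (proj2_sig y));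
            gone := exist _ gone (gen_one S);
            ginv := fun x => exist _ (ginv (proj1_sig x)) (gen_inv (proj2_sig x)) |};
  intros; apply sub_eq; simpl. apply gmulA. apply gmul1. apply gmulV.
Defined.
End Sub.

Lemma pres_L_gen (L : Grp) (c q : L) : is_pres_L L c q -> forall x, gen (fun y => y = c \/ y = q) x.
Proof.
  intros [Hr Hu] x. set (S := fun y : L => y = c \/ y = q).
  pose (cs := exist (gen S) c (gen_in S c (or_introl eq_refl)) : SubG S).
  pose (qs := exist (gen S) q (gen_in S q (or_intror eq_refl)) : SubG S).
  assert (Hrs : rel_L cs qs). { unfold rel_L, gconj. apply sub_eq. simpl. exact Hr. }
  destruct (Hu (SubG S) cs qs Hrs) as [fs [[Hfs [fc fq]] _]].
  destruct (Hu L c q Hr) as [f0 [_ Hun]].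
  assert (E1 := Hun (fun y => proj1_sig (fs y)) ltac:(intros a b; cbv beta; rewrite Hfs; reflexivity)
                  ltac:(cbv beta; rewrite fc; reflexivity) ltac:(cbv beta; rewrite fq; reflexivity) x).
  assert (E2 := Hun (fun y => y) ltac:(intros a b; reflexivity) eq_refl eq_refl x).
  simpl in *. rewrite <- E2 in E1. rewrite <- E1. apply proj2_sig.
Qed.

Lemma pres_K_gen (K : Grp) (a b s : K) : is_pres_K K a b s -> forall x, gen (fun y => y = a \/ y = b \/ y = s) x.
Proof.
  intros [Hr Hu] x. set (S := fun y : K => y = a \/ y = b \/ y = s).
  pose (as_ := exist (gen S) a (gen_in S a (or_introl eq_refl)) : SubG S).
  pose (bs := exist (gen S) b (gen_in S b (or_intror (or_introl eq_refl))) : SubG S).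
  pose (ss := exist (gen S) s (gen_in S s (or_intror (or_intror eq_refl))) : SubG S).
  assert (Hrs : rel_K as_ bs ss).
  { destruct Hr as [H1 H2]. unfold rel_K, gconj in *. split; apply sub_eq; simpl; assumption. }
  destruct (Hu (SubG S) as_ bs ss Hrs) as [fs [[Hfs [fa [fb fs']]] _]].
  destruct (Hu K a b s Hr) as [f0 [_ Hun]].
  assert (E1 := Hun (fun y => proj1_sig (fs y)) ltac:(intros u v; cbv beta; rewrite Hfs; reflexivity)
                  ltac:(cbv beta; rewrite fa; reflexivity) ltac:(cbv beta; rewrite fb; reflexivity) ltac:(cbv beta; rewrite fs'; reflexivity) x).
  assert (E2 := Hun (fun y => y) ltac:(intros u v; reflexivity) eq_refl eq_refl eq_refl x).
  simpl in *. rewrite <- E2 in E1. rewrite <- E1. apply proj2_sig.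
Qed.

Theorem part2 (K : Grp) (a b s : K) : is_pres_K K a b s ->
     forall x : K, centraliser s x <-> gen (fun y => y = gconj a b \/ y = b \/ y = s) x.
Proof.
  intros HP x. pose proof HP as [Hr Hu]. unfold centraliser. split.
  - intro Hc. destruct (Hu HG alH beH sigH relK_H) as [f [[Hf [fa [fb fs]]] _]].
    apply (cent_gen a b s Hr f Hf fa fb fs); auto. apply pres_K_gen; auto.
  - intro Hx. apply (gen_cent _ _ _ (TT_comm a b s Hr) Hx).
Qed.

Lemma conj_pow {L : Grp} (c q : L) i j : gconj (gpowz q i) (cL c q j) = cL c q (i + j).
Proof. unfold cL. rewrite gpowz_add. gsimpl. reflexivity. Qed.

Lemma relL_relK {L : Grp} (c q : L) : rel_L c q ->
  rel_K (gmul c (ginv q)) (gmul (gconj q c) (ginv c)) c.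
Proof.
  intro Hr. split.
  - gsimpl. reflexivity.
  - rewrite gconj_mul, (comm_conj _ _ Hr). f_equal. gsimpl. reflexivity.
Qed.

Lemma conj_cent {G : Grp} (g c x : G) : gmul x (gconj g c) = gmul (gconj g c) x ->
  gmul (gconj (ginv g) x) c = gmul c (gconj (ginv g) x).
Proof.
  intro H. transitivity (gmul (gmul (ginv g) (gmul x (gconj g c))) g).
  { gsimpl. reflexivity. }
  rewrite H. gsimpl. reflexivity.
Qed.

Theorem part1 (L : Grp) (c q : L) : is_pres_L L c q ->
     forall i : Z, forall x : L,
       centraliser (cL c q i) x <->
       gen (fun y => y = cL c q (i - 1)%Z \/ y = cL c q i \/ y = cL c q (i + 1)%Z) x.
Proof.
  intros HP i x. pose proof HP as [Hr Hu]. unfold centraliser.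
  set (al := gmul c (ginv q)). set (be := gmul (gconj q c) (ginv c)).
  assert (HK : rel_K al be c) by (apply relL_relK; auto).
  split.
  - intro Hc.
    destruct (Hu HG sigH (gmul (ginv alH) sigH) (relK_relL alH beH sigH relK_H)) as [f [[Hf [fc fq]] _]].
    assert (fa : f al = alH).
    { unfold al. rewrite Hf, (hom_inv f Hf), fc, fq. gsimpl. reflexivity. }
    assert (fb : f be = beH).
    { unfold be. rewrite Hf, (hom_conj f Hf), (hom_inv f Hf), fc, fq.
      rewrite (rel_X alH beH sigH relK_H). gsimpl. reflexivity. }
    set (Q := gpowz q i).
    assert (Hy : gmul (gconj (ginv Q) x) c = gmul c (gconj (ginv Q) x)).
    { apply conj_cent. exact Hc. }
    assert (Gy : gen (TT al be c) (gconj (ginv Q) x)).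
    { apply (cent_gen al be c HK f Hf fa fb fc); auto.
      apply (gen_sub (fun y => y = c \/ y = q)).
      - intros y [-> | ->].
        + apply gen_in. unfold S0; auto.
        + replace q with (gmul (ginv al) c) by (unfold al; gsimpl; reflexivity).
          apply gen_mul. apply gen_inv. apply gen_in. unfold S0; auto. apply gen_in. unfold S0; auto.
      - apply pres_L_gen; auto. }
    set (S01 := fun z => z = cL c q (-1) \/ z = cL c q 0 \/ z = cL c q 1).
    assert (G01 : gen S01 (gconj (ginv Q) x)).
    { apply (gen_sub (TT al be c)); auto.
      assert (C0 : gen S01 c).
      { replace c with (cL c q 0) by (unfold cL; simpl; gsimpl; reflexivity).
        apply gen_in. unfold S01; auto. }
      assert (C1 : gen S01 (cL c q 1)) by (apply gen_in; unfold S01; auto).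
      assert (Cm : gen S01 (cL c q (-1))) by (apply gen_in; unfold S01; auto).
      intros y [-> | [-> | ->]].
      - replace (gconj al be) with (gmul (gmul (gmul c c) (ginv (cL c q (-1)))) (ginv c)).
        + repeat apply gen_mul; auto; apply gen_inv; auto.
        + unfold al, be, cL. simpl. gsimpl. reflexivity.
      - replace be with (gmul (cL c q 1) (ginv c)).
        + apply gen_mul; auto. apply gen_inv; auto.
        + unfold be, cL. simpl. gsimpl. reflexivity.
      - auto. }
    replace x with (gconj Q (gconj (ginv Q) x)) by (gsimpl; reflexivity).
    apply (gen_sub (fun z => exists u, S01 u /\ z = gconj Q u)); [intros z Hz | apply gen_conj; exact G01].
    destruct Hz as [u [[-> | [-> | ->]] ->]]; unfold Q; rewrite conj_pow; apply gen_in.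
    + left. f_equal; try lia.
    + right; left. f_equal; try lia.
    + right; right. reflexivity.
  - intro Hx. refine (gen_cent _ (cL c q i) x _ Hx).
    intros y [-> | [-> | ->]].
    + replace (cL c q i) with (gconj (gpowz q (i - 1)) (cL c q 1))
        by (rewrite conj_pow; f_equal; lia).
      replace (cL c q (i - 1)) with (gconj (gpowz q (i - 1)) (cL c q 0))
        by (rewrite conj_pow; f_equal; lia).
      apply comm_conj_pres.
      replace (cL c q 0) with c by (unfold cL; simpl; gsimpl; reflexivity).
      replace (cL c q 1) with (gconj q c) by (unfold cL; simpl; gsimpl; reflexivity).
      exact Hr.
    + reflexivity.
    + replace (cL c q (i + 1)) with (gconj (gpowz q i) (cL c q 1))
        by (rewrite conj_pow; f_equal; lia).
      replace (cL c q i) with (gconj (gpowz q i) (cL c q 0))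
        by (rewrite conj_pow; f_equal; lia).
      apply comm_conj_pres.
      replace (cL c q 0) with c by (unfold cL; simpl; gsimpl; reflexivity).
      replace (cL c q 1) with (gconj q c) by (unfold cL; simpl; gsimpl; reflexivity).
      symmetry. exact Hr.
Qed.

Theorem lemma6p2 :
  (forall (L : Grp) (c q : L), is_pres_L L c q ->
     forall i : Z, forall x : L,
       centraliser (cL c q i) x <->
       gen (fun y => y = cL c q (i - 1)%Z \/ y = cL c q i \/ y = cL c q (i + 1)%Z) x)
  /\
  (forall (K : Grp) (a b s : K), is_pres_K K a b s ->
     forall x : K,
       centraliser s x <->
       gen (fun y => y = gconj a b \/ y = b \/ y = s) x).
Proof.
  split. exact part1. exact part2.
Qed.
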